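(* Let $F:\mathcal{H}\to\mathbb{R}$ be differentiable with $L$-Lipschitz gradient, $\arg\min F\ne\emptyset$, satisfying (PL) with $\mu>0$, and let $x(\cdot)$ be the solution of the heavy ball system with damping $\alpha>0$ and initial point $x_0$. Let $a,\delta\ge0$ and set $R:=\alpha-a+\delta$. Assume $$R>0,\qquad aR\le 2\mu,\qquad L-\alpha\delta+\frac{\delta}{2}R\le 0.$$ Then the function $V$ defined below satisfies $V(t)\le a(F(x_0)-F_* )e^{-Rt}$ for all $t\ge0$.
   Context: (PL) with constant $\mu>0$: $F(x)-F_*\le \frac{1}{2\mu}\|\nabla F(x)\|^2$ for all $x$, where $F_*=\min F$. Heavy ball system: $\ddot x(t)+\alpha\dot x(t)+\nabla F(x(t))=0$, $x(0)=x_0$, $\dot x(0)=0$ (unique $C^2$ global solution). For parameters $a,\delta$: $W(t)=F(x(t))-F_*$ and $V(t)=aW(t)+\langle\nabla F(x(t)),\dot x(t)\rangle+\frac\delta2\|\dot x(t)\|^2$. *)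

(* Defs.v *)
From HB Require Import structures.
From mathcomp Require Import all_boot all_order all_algebra.
From mathcomp Require Import all_classical all_reals all_analysis.
Set Implicit Arguments. Unset Strict Implicit. Unset Printing Implicit Defensive.
Import Order.TTheory GRing.Theory Num.Theory.
Import numFieldNormedType.Exports.
Local Open Scope ring_scope.
Local Open Scope classical_set_scope.

(* A real Hilbert space is modelled as a complete normed module V over a
   realType R together with an inner product ip inducing the norm. *)
Definition is_inner_product (R : realType) (V : normedModType R)
  (ip : V -> V -> R) : Prop :=
  (forall x y : V, ip x y = ip y x) /\
  (forall (c : R) (x y z : V), ip (c *: x + y) z = c * ip x z + ip y z) /\
  (forall x : V, ip x x = `|x| ^+ 2).

Definition is_gradient (R : realType) (V : normedModType R)
  (ip : V -> V -> R) (F : V -> R) (gF : V -> V) : Prop :=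
  forall y : V, differentiable F y /\ forall h : V, 'd F y h = ip (gF y) h.

Definition Lyap (R : realType) (V : normedModType R)
  (ip : V -> V -> R) (F : V -> R) (gF : V -> V) (Fstar a delta : R)
  (x dx : R -> V) (t : R) : R :=
  a * (F (x t) - Fstar) + ip (gF (x t)) (dx t) + delta / 2 * `|dx t| ^+ 2.

(* Main.v *)
Require Import Defs.
From HB Require Import structures.
From mathcomp Require Import all_boot all_order all_algebra.
From mathcomp Require Import all_classical all_reals all_analysis.
From mathcomp Require Import ring lra.
Import Order.TTheory GRing.Theory Num.Theory.
Import numFieldNormedType.Exports.
Local Open Scope ring_scope.
Local Open Scope classical_set_scope.
Section IP.
Variables (R : realType) (H : normedModType R) (ip : H -> H -> R).
Hypothesis Hip : is_inner_product ip.
Lemma Hs : forall x y : H, ip x y = ip y x.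
Proof. by case: Hip. Qed.
Lemma Hl : forall (c : R) (x y z : H), ip (c *: x + y) z = c * ip x z + ip y z.
Proof. by case: Hip => _ []. Qed.
Lemma Hn : forall x : H, ip x x = `|x| ^+ 2.
Proof. by case: Hip => _ []. Qed.

Lemma ip0l z : ip 0 z = 0.
Proof. have := Hl 1 0 0 z; rewrite scaler0 addr0 mul1r; lra. Qed.
Lemma ipDl x y z : ip (x + y) z = ip x z + ip y z.
Proof. by rewrite -[x]scale1r Hl mul1r scale1r. Qed.
Lemma ipZl c x z : ip (c *: x) z = c * ip x z.
Proof. by rewrite -[c *: x]addr0 Hl ip0l addr0. Qed.
Lemma ipNl x z : ip (- x) z = - ip x z.
Proof. by rewrite -scaleN1r ipZl mulN1r. Qed.
Lemma ipBl x y z : ip (x - y) z = ip x z - ip y z.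
Proof. by rewrite ipDl ipNl. Qed.
Lemma ipDr x y z : ip z (x + y) = ip z x + ip z y.
Proof. by rewrite Hs ipDl !(Hs z). Qed.
Lemma ipZr c x z : ip z (c *: x) = c * ip z x.
Proof. by rewrite Hs ipZl Hs. Qed.
Lemma ip0r z : ip z 0 = 0.
Proof. by rewrite Hs ip0l. Qed.
Lemma ipNr x z : ip z (- x) = - ip z x.
Proof. by rewrite Hs ipNl Hs. Qed.
Lemma ipBr x y z : ip z (x - y) = ip z x - ip z y.
Proof. by rewrite ipDr ipNr. Qed.

Lemma ip_polar a b : ip a b = (`|a + b| ^+ 2 - `|a| ^+ 2 - `|b| ^+ 2) / 2.
Proof.
rewrite -!Hn ipDl !ipDr (Hs b a).
by field.
Qed.

Lemma ip_CS a b : `|ip a b| <= `|a| * `|b|.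
Proof.
have key : forall s : R, 0 <= s ^+ 2 * `|a| ^+ 2 + 2 * s * ip a b + `|b| ^+ 2.
  move=> s; have E := Hn (s *: a + b).
  rewrite ipDl !ipDr !ipZl !ipZr (Hs b a) !Hn in E.
  have : 0 <= `|s *: a + b| ^+ 2 by apply: sqr_ge0.
  rewrite -E; nra.
have [a0|a0] := eqVneq a 0.
  by rewrite a0 ip0l !normr0 mul0r.
have na : 0 < `|a| by rewrite normr_gt0.
have := key (- ip a b / `|a| ^+ 2).
set q := ip a b; set A := `|a|; set B := `|b| => h.
have h2 : q ^+ 2 <= (A * B) ^+ 2.
  have hA2 : 0 < A ^+ 2 by rewrite exprn_gt0.
  have : 0 <= A ^+ 2 * (A ^+ 2 * B ^+ 2 - q ^+ 2).
    suff -> : A ^+ 2 * (A ^+ 2 * B ^+ 2 - q ^+ 2) = (A ^+ 2) ^+ 2 * ((- q / A ^+ 2) ^+ 2 * A ^+ 2 + 2 * (- q / A ^+ 2) * q + B ^+ 2).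
      by apply: mulr_ge0 => //; apply: sqr_ge0.
    by field; rewrite gt_eqF.
  by rewrite pmulr_rge0 // subr_ge0 exprMn.
have hB : 0 <= B by rewrite normr_ge0.
have hA : 0 <= A by rewrite normr_ge0.
have hq : `|q| ^+ 2 = q ^+ 2 by rewrite real_normK ?num_real.
have := normr_ge0 q; have := mulr_ge0 hA hB; nra.
Qed.

Lemma cvg_ip (T : Type) (F : set_system T) (FF : Filter F) (f g : T -> H) (A B : H) :
  f @ F --> A -> g @ F --> B -> (fun y => ip (f y) (g y)) @ F --> ip A B.
Proof.
move=> fA gB.
have -> : (fun y => ip (f y) (g y)) = (fun y => (`|f y + g y| ^+ 2 - `|f y| ^+ 2 - `|g y| ^+ 2) / 2).
  by apply/funext => y; rewrite ip_polar.
rewrite ip_polar !expr2.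
under eq_fun do rewrite !expr2.
apply: cvgMr_tmp; apply: cvgB; [apply: cvgB|]; apply: cvgM; apply: cvg_norm => //;
exact: cvgD.
Qed.
End IP.
Section Dini.
Variables (R : realType) (phi : R -> R).
Hypothesis Hc : forall s : R, 0 < s -> phi @ s --> phi s.
Hypothesis H0 : phi @ 0^'+ --> phi 0.
Hypothesis Hd : forall t : R, 0 < t -> forall e : R, 0 < e ->
  \forall h \near 0^'+, phi (t + h) - phi t <= e * h.

Lemma dini_step e t0 T : 0 < e -> 0 < t0 <= T -> phi T <= phi t0 + e * (T - t0).
Proof.
move=> e0 /andP[t00 t0T].
pose S := [set s | t0 <= s <= T /\ forall r, t0 <= r <= s -> phi r <= phi t0 + e * (r - t0)].
have St0 : S t0.
  split; first by rewrite lexx t0T.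
  move=> r /andP[h1 h2]; have -> : r = t0 by apply/eqP; rewrite eq_le h1 h2.
  by rewrite subrr mulr0 addr0.
have ubS : ubound S T by move=> s [/andP[_ ?] _].
have hS : has_sup S by split; [exists t0 | exists T].
set c := sup S.
have t0c : t0 <= c by apply: sup_upper_bound.
have cT : c <= T by apply: ge_sup => //; exists t0.
have Pc : forall r, t0 <= r <= c -> phi r <= phi t0 + e * (r - t0).
  move=> r /andP[r1 r2].
  have [rc|rc] := ltP r c.
    have [s Ss hs] := sup_adherent (ltac:(rewrite subr_gt0 //) : 0 < c - r) hS.
    rewrite /c opprD addrA subrr add0r opprK in hs.
    by case: Ss => _; apply; rewrite r1 ltW.
  have -> : r = c by apply/eqP; rewrite eq_le r2 rc.
  have [ct0|ct0] := eqVneq c t0.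
    by rewrite ct0 subrr mulr0 addr0.
  have t0c' : t0 < c by rewrite lt_neqAle eq_sym ct0 t0c.
  apply: (@ler_cvg_to R (c^'-) _ R phi (fun r => phi t0 + e * (r - t0))).
  - apply: cvg_at_left_filter; apply: Hc; lra.
  - apply: cvgD; first exact: cvg_cst.
    apply: cvgMl_tmp; apply: cvgB; [exact: cvg_at_left_filter | exact: cvg_cst].
  - exists (c - t0) => /=; first lra.
    move=> r' /= H1 H2.
    move: H1; rewrite ltr_norml => /andP[H1 H1'].
    have [s Ss hs] := sup_adherent (ltac:(rewrite subr_gt0 //) : 0 < c - r') hS.
    rewrite /c opprD addrA subrr add0r opprK in hs.
    case: Ss => _; apply; apply/andP; split; lra.
have [cT'|cT'] := eqVneq c T.
  by apply: Pc; rewrite t0T -cT' lexx.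
have cT2 : c < T by rewrite lt_neqAle cT' cT.
have [eta eta0 Heta] := @Hd c (lt_le_trans t00 t0c) e e0.
pose h0 := Num.min eta (T - c) / 2.
have h00 : 0 < h0.
  rewrite /h0 divr_gt0 // lt_min eta0 /=; lra.
have h0eta : h0 < eta.
  have : Num.min eta (T - c) <= eta by rewrite ge_min lexx.
  move: h00; rewrite /h0; lra.
have h0T : h0 < T - c.
  have : Num.min eta (T - c) <= T - c by rewrite ge_min lexx orbT.
  move: h00; rewrite /h0; lra.
have : S (c + h0).
  split; first by apply/andP; split; lra.
  move=> r /andP[r1 r2].
  have [rc|rc] := leP r c; first by apply: Pc; rewrite r1 rc.
  have := Heta (r - c).
  rewrite /= sub0r normrN gtr0_norm; last lra.
  move=> /(_ ltac:(lra)) /(_ ltac:(lra)).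
  have := Pc c; rewrite t0c lexx => /(_ isT).
  rewrite (_ : c + (r - c) = r); last by rewrite addrC subrK.
  lra.
move=> /sup_upper_bound => /(_ hS); rewrite -/c; lra.
Qed.

Lemma dini_mono T : 0 <= T -> phi T <= phi 0.
Proof.
move=> T0; have [->|TN0] := eqVneq T 0; first by [].
have Tp : 0 < T by rewrite lt_neqAle eq_sym TN0 T0.
have step : forall t0, 0 < t0 <= T -> phi T <= phi t0.
  move=> t0 ht0; apply/ler_addgt0Pr => eps eps0.
  have := ht0 => /andP[h1 h2].
  have := @dini_step (eps / (T - t0 + 1)) t0 T ltac:(apply: divr_gt0; lra) ht0.
  have : eps / (T - t0 + 1) * (T - t0) <= eps.
    rewrite mulrAC ler_pdivrMr; last lra.
    nra.
  lra.
apply: (@ler_cvg_to R (0^'+) _ R (fun=> phi T) phi); [exact: cvg_cst | exact: H0 |].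
exists T => /=; first exact: Tp.
move=> r /= H1 H2; apply: step; rewrite H2 /=.
move: H1; rewrite sub0r normrN gtr0_norm //; apply: ltW.
Qed.
End Dini.

Lemma dq_cvg (R : realType) (H : normedModType R) (x : R -> H) (t : R) (v : H): is_derive t 1 x v ->
  (fun h => h^-1 *: (x (h + t) - x t)) @ 0^' --> v.
Proof. case=> d1 d2.
have -> : (fun h => h^-1 *: (x (h + t) - x t)) = (fun h => h^-1 *: ((x \o shift t) (h *: 1) - x t)).
  apply/funext => h /=. by rewrite [_%:A]mulr1.
rewrite -d2; exact: d1. Qed.

Lemma exp_derive (R : realType) (k t : R) : is_derive t 1 (fun s : R => expR (k * s)) (expR (k * t) * k).
Proof.
have hk : is_derive t 1 (fun s : R => k * s) k.
  have h0 := is_deriveZ k (is_derive_id t (1:R)).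
  rewrite (_ : (k \*: id) = (fun s : R => k * s)) in h0; last by apply/funext.
  by rewrite [k *: 1]mulr1 in h0.
exact: (is_derive1_comp (is_derive_expR (k * t)) hk).
Qed.

Lemma comp_derive (R : realType) (H : normedModType R) (ip : H -> H -> R) (F : H -> R) (gF : H -> H)
  (x : R -> H) (t : R) (v : H) :
  is_gradient ip F gF -> is_derive t 1 x v -> is_derive t 1 (fun s => F (x s)) (ip (gF (x t)) v).
Proof.
move=> Hg hx; have [d1 d2] := hx.
have dx : differentiable x t by apply/derivable1_diffP.
have [dF dFv] := Hg (x t).
have dc : differentiable (F \o x) t := differentiable_comp dx dF.
split; first by apply/derivable1_diffP.
rewrite (deriveE _ dc) diff_comp //= -(deriveE _ dx) d2 dFv.
by [].
Qed.

Lemma shift_cvg (R : realType) (t : R) : (fun h : R => h + t) @ 0^' --> t.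
Proof.
apply: cvg_within_filter.
rewrite -{2}(add0r t); apply: cvgD; [exact: cvg_id | exact: cvg_cst].
Qed.

Section Main.
Variables (R : realType) (H : completeNormedModType R)
  (ip : H -> H -> R) (F : H -> R) (gF : H -> H) (L mu alpha a delta Fstar : R)
  (x0 : H) (x dx : R -> H).
Hypothesis Hip : is_inner_product ip.
Hypothesis Hg : is_gradient ip F gF.
Hypothesis HL : forall y z : H, `|gF y - gF z| <= L * `|y - z|.

Let k := alpha - a + delta.
Let phi := fun s => expR (k * s) * Lyap ip F gF Fstar a delta x dx s.

Lemma gF_cvg (T : Type) (G : set_system T) (FG : Filter G) (f : T -> H) (l : H) :
  f @ G --> l -> (fun s => gF (f s)) @ G --> gF l.
Proof.
move=> /cvgrPdist_lt fl; apply/cvgrPdist_lt => eps eps0.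
have p : 0 < eps / (`|L| + 1) by apply: divr_gt0 => //; rewrite ltr_pwDr.
apply: filterS (fl _ p) => s hs.
apply: (le_lt_trans (HL _ _)).
apply: (le_lt_trans (ler_norm _)); rewrite normrM normr_id.
have hL : 0 < `|L| + 1 by rewrite ltr_pwDr.
rewrite -(ltr_pM2l hL) in hs; rewrite mulrCA mulfV ?gt_eqF // mulr1 in hs.
apply: le_lt_trans hs; rewrite ler_wpM2r // lerDl //.
Qed.

Lemma phi_cvg (G : set_system R) (FG : Filter G) (s0 : R) :
  x @ G --> x s0 -> dx @ G --> dx s0 -> (fun s => s) @ G --> s0 ->
  phi @ G --> phi s0.
Proof.
case: Hip => Hs [Hl Hn].
move=> cx cu cs.
apply: cvgM.
  have := continuous_cvg _ (@continuous_expR R (k * s0)) (@cvgMl_tmp _ _ _ _ _ k _ cs).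
  by apply.
rewrite /Lyap; apply: cvgD; [apply: cvgD|].
- apply: cvgMl_tmp; apply: cvgB; last exact: cvg_cst.
  have cF : {for x s0, continuous F}.
    by apply: differentiable_continuous; case: (Hg (x s0)).
  exact: (continuous_cvg _ cF cx).
- by apply: (@cvg_ip _ _ _ Hip) => //; exact: gF_cvg.
- apply: cvgMl_tmp; rewrite expr2; under eq_fun do rewrite expr2.
  by apply: cvgM; apply: cvg_norm.
Qed.

Hypothesis Hx : forall t : R, 0 < t -> is_derive t 1 x (dx t).
Hypothesis Hdx : forall t : R, 0 < t -> is_derive t 1 dx (- (alpha *: dx t) - gF (x t)).
Hypothesis HPL : forall y : H, F y - Fstar <= 1 / (2 * mu) * `|gF y| ^+ 2.
Hypothesis mu0 : 0 < mu.
Hypothesis a0 : 0 <= a.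
Hypothesis d0 : 0 <= delta.
Hypothesis k0 : 0 < k.
Hypothesis akmu : a * k <= 2 * mu.
Hypothesis Lcond : L - alpha * delta + delta / 2 * k <= 0.

Lemma key_ineq (t : R) (uu gg upp : H) (ett : R) :
  uu = dx t -> gg = gF (x t) -> upp = - (alpha *: uu) - gg -> ett = expR (k * t) ->
  ett * (a * ip gg uu + ip gg upp + delta / 2 * (ip upp uu + ip uu upp))
  + Lyap ip F gF Fstar a delta x dx t * (ett * k) + ett * L * `|uu| * `|uu| <= 0.
Proof.
move=> -> -> -> ->.
set u := dx t; set g0 := gF (x t); set up := - (alpha *: u) - g0; set et := expR (k * t).
have [Hs [Hl Hn]] := Hip.
have et0 : 0 < et := expR_gt0 _.
have E1 : ip g0 up = - alpha * ip g0 u - `|g0| ^+ 2.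
  by rewrite /up (@ipBr _ _ _ Hip) (@ipNr _ _ _ Hip) (@ipZr _ _ _ Hip) Hn; ring.
have E2 : ip up u = - alpha * `|u| ^+ 2 - ip g0 u.
  by rewrite /up (@ipBl _ _ _ Hip) (@ipNl _ _ _ Hip) (@ipZl _ _ _ Hip) Hn; ring.
have E3 : ip u up = - alpha * `|u| ^+ 2 - ip g0 u.
  by rewrite Hs E2.
rewrite /Lyap -/u -/g0 E1 E2 E3.
have hW := HPL (x t); rewrite -/g0 in hW.
set W := F (x t) - Fstar in hW *.
set q := ip g0 u.
set N := `|u|; set G := `|g0|.
have N0 : 0 <= N ^+ 2 by apply: sqr_ge0.
have G0 : 0 <= G ^+ 2 by apply: sqr_ge0.
have ak0 : 0 <= a * k by apply: mulr_ge0 => //; apply: ltW.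
have hW2 : a * k * W <= G ^+ 2.
  apply: (le_trans (ler_wpM2l ak0 hW)).
  rewrite mulrA -[X in _ <= X]mul1r ler_wpM2r //.
  rewrite mul1r ler_pdivrMr ?mulr_gt0 // mul1r //.
have h3 : (L - alpha * delta + delta / 2 * k) * N ^+ 2 <= 0.
  by apply: mulr_le0_ge0.
apply: (@le_trans _ _ (et * (a * k * W - G ^+ 2 + (L - alpha * delta + delta / 2 * k) * N ^+ 2))).
  rewrite /k; nra.
apply: mulr_ge0_le0; first exact: ltW.
lra.
Qed.

Lemma phi_dini (t : R) : 0 < t -> forall eps : R, 0 < eps ->
  \forall h \near 0^'+, phi (t + h) - phi t <= eps * h.
Proof.
move=> ht eps eps0.
have Hip' := Hip; case: Hip' => Hs [Hl Hn].
pose u := dx t; pose g0 := gF (x t); pose up := - (alpha *: u) - g0.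
pose et := expR (k * t); pose B0 := Lyap ip F gF Fstar a delta x dx t.
have cx := @dq_cvg _ _ _ _ _ (Hx t ht).
have cu := @dq_cvg _ _ _ _ _ (Hdx t ht).
have cW := @dq_cvg _ _ _ _ _ (@comp_derive _ _ _ _ _ _ t _ Hg (Hx t ht)).
have ce := @dq_cvg _ _ _ _ _ (@exp_derive R k t).
have sh := @shift_cvg R t.
have contx : {for t, continuous x}.
  by apply: differentiable_continuous; apply/derivable1_diffP; case: (Hx t ht).
have contu : {for t, continuous dx}.
  by apply: differentiable_continuous; apply/derivable1_diffP; case: (Hdx t ht).
have xc : (fun h => x (h + t)) @ 0^' --> x t := continuous_cvg _ contx sh.
have uc : (fun h => dx (h + t)) @ 0^' --> dx t := continuous_cvg _ contu sh.
have ec : (fun h => expR (k * (h + t))) @ 0^' --> et.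
  have := continuous_cvg _ (@continuous_expR R (k * t)) (@cvgMl_tmp _ _ _ _ _ k _ sh).
  by apply.
pose dqu := fun h : R => h^-1 *: (dx (h + t) - u).
pose Q := fun h : R => expR (k * (h + t)) * (a * (h^-1 * (F (x (h + t)) - F (x t)))
   + ip g0 (dqu h) + delta / 2 * (ip (dqu h) (dx (h + t)) + ip u (dqu h)))
   + B0 * (h^-1 * (expR (k * (h + t)) - expR (k * t))).
pose M := fun h : R => expR (k * (h + t)) * L * `|h^-1 *: (x (h + t) - x t)| * `|dx (h + t)|.
pose l := et * (a * ip g0 u + ip g0 up + delta / 2 * (ip up u + ip u up))
  + B0 * (et * k) + et * L * `|u| * `|u|.
have cS : (fun h => Q h + M h) @ 0^' --> l.
  apply: cvgD; last first.
    apply: cvgM; [apply: cvgM; [apply: cvgMr_tmp; exact: ec|]|]; apply: cvg_norm.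
      exact: cx.
    exact: uc.
  apply: cvgD; last by apply: cvgMl_tmp; exact: ce.
  apply: cvgM; first exact: ec.
  apply: cvgD; [apply: cvgD|].
  - by apply: cvgMl_tmp; exact: cW.
  - by apply: (@cvg_ip _ _ _ Hip); [exact: cvg_cst | exact: cu].
  - apply: cvgMl_tmp; apply: cvgD.
      by apply: (@cvg_ip _ _ _ Hip); [exact: cu | exact: uc].
    by apply: (@cvg_ip _ _ _ Hip); [exact: cvg_cst | exact: cu].
have l0 : l <= 0 by exact: key_ineq.
have nS : \forall h \near 0^', Q h + M h < eps.
  move/cvgrPdist_lt: cS => /(_ (eps - l) ltac:(lra)).
  apply: filterS => h; rewrite ltr_norml => /andP[h1 h2]; lra.
have nS' : nbhs (0:R) (fun h => h != 0 -> Q h + M h < eps) := nS.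
suff : nbhs (0:R) (fun h => 0 < h -> phi (t + h) - phi t <= eps * h) by [].
apply: filterS nS' => h Hh hpos.
have hN0 : h != 0 by rewrite gt_eqF.
have {}Hh := Hh hN0.
have bound : phi (t + h) - phi t <= h * (Q h + M h).
  have E0 : 0 < expR (k * (h + t)) := expR_gt0 _.
  have id1 : phi (t + h) - phi t = h * Q h
     + expR (k * (h + t)) * ip (gF (x (h + t)) - g0) (dx (h + t)).
    rewrite /phi /Q /Lyap /B0 /Lyap /dqu (addrC t h) -/u -/g0.
    rewrite !(@ipZr _ _ _ Hip) !(@ipZl _ _ _ Hip) !(@ipBr _ _ _ Hip) !(@ipBl _ _ _ Hip) -!Hn.
    field; exact: hN0.
  have ib : ip (gF (x (h + t)) - g0) (dx (h + t)) <= L * `|x (h + t) - x t| * `|dx (h + t)|.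
    apply: (le_trans (ler_norm _)); apply: (le_trans (@ip_CS _ _ _ Hip _ _)).
    by apply: ler_wpM2r => //; apply: HL.
  have hM : h * M h = expR (k * (h + t)) * (L * `|x (h + t) - x t| * `|dx (h + t)|).
    rewrite /M normrZ gtr0_norm ?invr_gt0 //.
    field; exact: hN0.
  rewrite id1 [h * (Q h + M h)]mulrDr hM lerD2l.
  by apply: ler_wpM2l => //; apply: ltW.
apply: (le_trans bound); rewrite mulrC ler_wpM2r //; [exact: ltW | exact: ltW].
Qed.

Hypothesis Hx0 : x 0 = x0.
Hypothesis Hdx0 : dx 0 = 0.
Hypothesis cx0 : x @ at_right 0 --> x 0.
Hypothesis cdx0 : dx @ at_right 0 --> dx 0.

Lemma final (T : R) : 0 <= T ->
  Lyap ip F gF Fstar a delta x dx T <= a * (F x0 - Fstar) * expR (- (k * T)).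
Proof.
move=> T0.
have hc : forall s : R, 0 < s -> phi @ s --> phi s.
  move=> s hs; apply: phi_cvg; last exact: cvg_id.
    by apply: differentiable_continuous; apply/derivable1_diffP; case: (Hx s hs).
  by apply: differentiable_continuous; apply/derivable1_diffP; case: (Hdx s hs).
have h0 : phi @ 0^'+ --> phi 0.
  apply: phi_cvg => //; exact: cvg_at_right_filter cvg_id.
have := @dini_mono R phi hc h0 phi_dini T T0.
have [Hs [Hl Hn]] := Hip.
have -> : phi 0 = a * (F x0 - Fstar).
  rewrite /phi /Lyap mulr0 expR0 mul1r Hx0 Hdx0 (@ip0r _ _ _ Hip) normr0.
  by rewrite expr2 mulr0 mulr0 !addr0.
rewrite /phi => h.
have E : 0 < expR (- (k * T)) := expR_gt0 _.
have := ler_wpM2r (ltW E) h.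
by rewrite mulrAC -expRD addrN expR0 mul1r.
Qed.
End Main.
Theorem lemma6p1 (R : realType) (H : completeNormedModType R)
  (ip : H -> H -> R) (F : H -> R) (gF : H -> H) (L mu alpha a delta Fstar : R)
  (x0 : H) (x dx : R -> H) :
  is_inner_product ip ->
  is_gradient ip F gF ->
  (forall y z : H, `|gF y - gF z| <= L * `|y - z|) ->
  (exists xs : H, F xs = Fstar) -> (forall y : H, Fstar <= F y) ->
  0 < mu ->
  (forall y : H, F y - Fstar <= 1 / (2 * mu) * `|gF y| ^+ 2) ->
  0 < alpha ->
  (* x is the solution of  x'' + alpha x' + gF x = 0, x(0) = x0, x'(0) = 0 on [0,+oo) *)
  x 0 = x0 -> dx 0 = 0 ->
  x @ at_right 0 --> x 0 -> dx @ at_right 0 --> dx 0 ->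
  (forall t : R, 0 < t -> is_derive t 1 x (dx t)) ->
  (forall t : R, 0 < t -> is_derive t 1 dx (- (alpha *: dx t) - gF (x t))) ->
  0 <= a -> 0 <= delta ->
  0 < alpha - a + delta ->
  a * (alpha - a + delta) <= 2 * mu ->
  L - alpha * delta + delta / 2 * (alpha - a + delta) <= 0 ->
  forall t : R, 0 <= t ->
    Lyap ip F gF Fstar a delta x dx t
      <= a * (F x0 - Fstar) * expR (- ((alpha - a + delta) * t)).
Proof.
move=> Hip Hg HL _ _ mu0 HPL _ Hx0 Hdx0 cx0 cdx0 Hx Hdx a0 d0 k0 akmu Lcond t t0.
by eapply final; eassumption.
Qed.
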